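(* In the forking model with more than two alternatives, there exists a forking problem with a monotonic profile that admits no stable assignment.
   Context: A forking problem consists of agents $V=\{v_1,\dots,v_n\}$ and a finite set $M$ of alternatives. Each agent $v_i$ has a strict total order $\succ_i$ on $M\times\{1,\dots,n\}$, where $(S,j)$ means being in the community adopting alternative $S$, of size $j$ (including oneself); it is monotonic if $(S,j)\succ_i(S,k)$ for all $S\in M$ and $1\le k<j\le n$. An assignment is a map $f:V\to M$; $v_i$ prefers $f$ to $g$ if $(f(v_i),|f^{-1}(f(v_i))|)\succ_i(g(v_i),|g^{-1}(g(v_i))|)$. An assignment $f$ is stable if there is no assignment $f'\neq f$ such that every agent $v_i$ with $f'(v_i)\neq f(v_i)$ prefers $f'$ to $f$. *)

(* Defs.v *)
From mathcomp Require Import all_boot.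
Set Implicit Arguments. Unset Strict Implicit. Unset Printing Implicit Defensive.

(* Agent i's preference is a relation  pref i  on M * nat, where
   pref i (S,j) (T,k) means (S,j) \succ_i (T,k); only pairs (S,j) with
   1 <= j <= n are meaningful. *)

Definition valid_pair (n : nat) (M : Type) (p : M * nat) : bool :=
  (0 < p.2) && (p.2 <= n).

Definition strict_total_on (M : eqType) (n : nat) (r : rel (M * nat)) : Prop :=
  [/\ (forall p, valid_pair n p -> ~~ r p p),
      (forall p q s, valid_pair n p -> valid_pair n q -> valid_pair n s ->
         r p q -> r q s -> r p s)
    & (forall p q, valid_pair n p -> valid_pair n q -> p != q ->
         r p q || r q p)].

Definition monotonic (M : Type) (n : nat) (pref : 'I_n -> rel (M * nat)) : Prop :=
  forall i (S : M) (j k : nat), 1 <= k -> k < j -> j <= n -> pref i (S, j) (S, k).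

Definition comm_size (M : finType) (n : nat) (f : {ffun 'I_n -> M}) (v : 'I_n) : nat :=
  #|[set w | f w == f v]|.

Definition prefers (M : finType) (n : nat) (pref : 'I_n -> rel (M * nat))
  (v : 'I_n) (f g : {ffun 'I_n -> M}) : bool :=
  pref v (f v, comm_size f v) (g v, comm_size g v).

Definition stable (M : finType) (n : nat) (pref : 'I_n -> rel (M * nat))
  (f : {ffun 'I_n -> M}) : Prop :=
  ~ exists f' : {ffun 'I_n -> M},
      f' != f /\ (forall v, f' v != f v -> prefers pref v f' f).

(* Main.v *)
Require Import Defs.
From mathcomp Require Import all_boot zify.
Definition tab (t j : nat) : nat :=
  match t, j with
  | 0, 3 => 9 | 0, 2 => 8 | 0, 1 => 5
  | 1, 3 => 7 | 1, 2 => 6 | 1, 1 => 4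
  | 2, 3 => 3 | 2, 2 => 2 | 2, 1 => 1
  | _, _ => 0 end.
Definition sp (i r j : nat) : nat := tab ((r + 3 - i) %% 3) j.
Lemma sp_inj i r1 r2 j k : i < 3 -> r1 < 3 -> r2 < 3 -> 0 < j <= 3 -> 0 < k <= 3 ->
  sp i r1 j = sp i r2 k -> r1 = r2 /\ j = k.
Proof.
move: i r1 r2 j k; do 3!(case=> [|[|[|?]]] //); do 2!(case=> [|[|[|[|?]]]] //).
Qed.
Lemma sp_mono i r j k : i < 3 -> r < 3 -> 0 < k -> k < j -> j <= 3 -> sp i r k < sp i r j.
Proof.
move: i r j k; do 2!(case=> [|[|[|?]]] //); do 2!(case=> [|[|[|[|?]]]] //).
Qed.
Definition cnt (X : seq nat) (v : nat) := count (fun w => nth 0 X w == nth 0 X v) (iota 0 3).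
Definition triples : seq (seq nat) :=
  [seq a :: bc | a <- iota 0 3, bc <- [seq [:: b; c] | b <- iota 0 3, c <- iota 0 3]].
Definition check := all (fun X => has (fun Y => (Y != X) && all (fun v =>
  (nth 0 Y v != nth 0 X v) ==> (sp v (nth 0 X v) (cnt X v) < sp v (nth 0 Y v) (cnt Y v))) (iota 0 3)) triples) triples.
Lemma check_ok : check. Proof. by []. Qed.
Lemma triplesP : all (fun X => (size X == 3) && all (gtn 3) X) triples. Proof. by []. Qed.
Lemma in_triples X : size X = 3 -> all (gtn 3) X -> X \in triples.
Proof. case: X => [|a [|b [|c [|]]]] //= _.
by case/and4P; case: a => [|[|[|?]]] //; case: b => [|[|[|?]]] //; case: c => [|[|[|?]]].
Qed.

Lemma card3 (F : pred nat) : #|[set w : 'I_3 | F (val w)]| = count F (iota 0 3).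
Proof.
rewrite -val_enum_ord count_map cardE /enum_mem size_filter /enum_mem count_filter.
apply: eq_count => w /=. by rewrite !inE andbT.
Qed.

Section Main.
Variable M : finType.
Definition idx (S : M) : nat := index S (enum M).
Definition off : nat := 4 * #|M|.
Definition rk (i : nat) (p : M * nat) : nat :=
  if idx p.1 < 3 then off + sp i (idx p.1) p.2 else idx p.1 * 4 + p.2.
Definition prf (i : 'I_3) : rel (M * nat) := fun p q => rk i q < rk i p.

Lemma idx_lt S : idx S < #|M|.
Proof. by rewrite /idx cardE index_mem mem_enum. Qed.

Lemma idx_off S k : k <= 3 -> idx S * 4 + k < off.
Proof.
move=> hk; have h := idx_lt S.
have h2 : (idx S).+1 * 4 <= off by rewrite /off [4 * _]mulnC leq_mul2r h orbT.
lia.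
Qed.

Lemma idx_inj : injective idx.
Proof. move=> S T; by apply: (index_inj S); rewrite mem_enum. Qed.

Lemma idx_nth x0 k : k < #|M| -> idx (nth x0 (enum M) k) = k.
Proof. by move=> hk; rewrite /idx index_uniq ?enum_uniq // -cardE. Qed.

Lemma rk_inj i p q : i < 3 -> valid_pair 3 p -> valid_pair 3 q -> rk i p = rk i q -> p = q.
Proof.
case: p => S j; case: q => T k hi /andP [/= hj1 hj2] /andP [/= hk1 hk2].
rewrite /rk /=.
have hS := @idx_off S j hj2; have hT := @idx_off T k hk2.
case: ltnP => hs; case: ltnP => ht => E.
- have [e1 e2] : idx S = idx T /\ j = k.
    apply: (@sp_inj i) => //; try (apply/andP; split => //). exact: addnI E.
  by move/idx_inj: e1 => ->; rewrite e2.
- exfalso; lia.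
- exfalso; lia.
- have e1 : idx S = idx T by lia.
  have e2 : j = k by lia.
  by move/idx_inj: e1 => ->; rewrite e2.
Qed.

Lemma prf_total i : strict_total_on 3 (prf i).
Proof.
split.
- by move=> p _; rewrite /prf ltnn.
- by move=> p q s _ _ _ h1 h2; rewrite /prf; apply: ltn_trans h2 h1.
- move=> p q hp hq; apply: contraR; rewrite negb_or /prf -!leqNgt => /andP [h1 h2].
  have E : rk i p = rk i q by apply/eqP; rewrite eqn_leq h1 h2.
  by rewrite (@rk_inj i p q (ltn_ord i) hp hq E).
Qed.

Lemma prf_mono : monotonic prf.
Proof.
move=> i S j k hk hkj hj; rewrite /prf /rk /=.
case: (ltnP (idx S) 3) => hs.
- rewrite ltn_add2l; exact: sp_mono.
- lia.
Qed.

Lemma cs_le3 (g : {ffun 'I_3 -> M}) v : comm_size g v <= 3.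
Proof. by rewrite /comm_size; apply: leq_trans (max_card _) _; rewrite card_ord. Qed.

Lemma cs_cnt (g : {ffun 'I_3 -> M}) (Z : seq nat) v :
  (forall w : 'I_3, idx (g w) = nth 0 Z w) -> comm_size g v = cnt Z v.
Proof.
move=> hZ; rewrite /comm_size /cnt -card3; apply: eq_card => w; rewrite !inE -!hZ.
apply/eqP/eqP => [-> // | ]; exact: idx_inj.
Qed.

Lemma not_stable (f : {ffun 'I_3 -> M}) : 2 < #|M| -> ~ stable prf f.
Proof.
move=> hM; rewrite /stable => H; apply: H.
set x0 := f ord0.
case: (boolP [forall v, idx (f v) < 3]) => [/forallP hall | /forallPn [v hv]].
- pose X := [seq idx (f w) | w <- enum 'I_3].
  have hX : forall w : 'I_3, idx (f w) = nth 0 X w.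
    move=> w; rewrite /X (nth_map ord0) ?size_enum_ord ?ltn_ord //.
    by rewrite nth_ord_enum.
  have sX : size X = 3 by rewrite size_map size_enum_ord.
  have tX : X \in triples.
    apply: in_triples => //; apply/allP => k /mapP [w _ ->]; exact: hall.
  have := check_ok; move/allP/(_ X tX)/hasP => [Y tY /andP [nYX hYc]].
  have := (allP triplesP) Y tY => /andP [/eqP sY aY].
  have Ylt : forall w : 'I_3, nth 0 Y w < 3.
    by move=> w; apply: (allP aY); apply: mem_nth; rewrite sY.
  pose f' := [ffun w : 'I_3 => nth x0 (enum M) (nth 0 Y w)].
  have hY : forall w : 'I_3, idx (f' w) = nth 0 Y w.
    move=> w; rewrite ffunE idx_nth //; apply: leq_trans (Ylt w) _; exact: hM.
  exists f'; split.
  + apply: contra nYX => /eqP E; apply/eqP; apply: (@eq_from_nth _ 0); first by rewrite sX sY.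
    move=> k; rewrite sY => hk.
    by rewrite -[k]/(val (Ordinal hk)) -hY -hX E.
  + move=> v hv; rewrite /prefers /prf /rk /=.
    rewrite (hall v) hY (Ylt v) hX (cs_cnt _ _ _ hY) (cs_cnt _ _ _ hX) ltn_add2l.
    have hv' : nth 0 Y v != nth 0 X v.
      by apply: contra hv; rewrite -hY -hX => /eqP /idx_inj ->.
    have := allP hYc (val v); rewrite mem_iota ltn_ord => /(_ isT) /implyP; exact.
- pose f' := [ffun w => if w == v then nth x0 (enum M) 0 else f w].
  have h0 : idx (nth x0 (enum M) 0) = 0 by rewrite idx_nth // (ltn_trans _ hM).
  exists f'; split.
  + apply/eqP => /ffunP /(_ v); rewrite ffunE eqxx => E.
    by move: hv; rewrite -E h0.
  + move=> w; rewrite ffunE; case: (eqVneq w v) => [-> _ | ne]; last by rewrite eqxx.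
    rewrite /prefers /prf /rk /= ffunE eqxx h0 /= (negbTE hv).
    have := @idx_off (f v) _ (cs_le3 f v). lia.
Qed.
End Main.

Theorem proposition3 (M : finType) (hM : 2 < #|M|) :
  exists (n : nat) (pref : 'I_n -> rel (M * nat)),
    (forall i, strict_total_on n (pref i)) /\ monotonic pref /\
    (forall f : {ffun 'I_n -> M}, ~ stable pref f).
Proof.
exists 3, (@prf M); split; first exact: prf_total.
split; first exact: prf_mono.
by move=> f; apply: not_stable.
Qed.
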